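(* Let $G\le\mathrm{Aut}(\mathcal{T}_d)$ be any self-similar group. Then every non-trivial element of the Röver–Nekrashevych group $V_d(G)$ has infinitely many $F_d$-conjugates; equivalently, the inclusion $L(F_d)\subseteq L(V_d(G))$ is irreducible.
   Context: Fix $d\ge2$. $\mathcal{T}_d$ is the infinite rooted $d$-regular tree with vertex set $\{1,\dots,d\}^*$ (finite words, root the empty word), $w$ adjacent to $wi$. Every automorphism permutes the level-1 vertices, giving $\rho:\mathrm{Aut}(\mathcal{T}_d)\to S_d$. Let $\mathcal{T}_d(i)$ be the subtree spanned by words $iw$ and $\delta_i:\mathcal{T}_d\to\mathcal{T}_d(i)$, $w\mapsto iw$. For $g\in\mathrm{Aut}(\mathcal{T}_d)$ put $\phi_i(g)=\delta^{-1}_{\rho(g)i}\circ g|_{\mathcal{T}_d(i)}\circ\delta_i$. $G\le\mathrm{Aut}(\mathcal{T}_d)$ is self-similar if $\phi_i(G)\subseteq G$ for all $i$. Let $C_d=\{1,\dots,d\}^{\mathbb{N}}$, and for $w\in\{1,\dots,d\}^*$ let $C_d(w)=\{w\kappa:\kappa\in C_d\}$ with homeomorphism $h_w:C_d\to C_d(w)$, $\kappa\mapsto w\kappa$. $V_d(G)$ is the group of homeomorphisms of $C_d$ obtained by choosing two partitions of $C_d$ into the same number $n$ of cones $C_d(w_1^+),\dots,C_d(w_n^+)$ and $C_d(w_1^-),\dots,C_d(w_n^-)$, a bijection $i\mapsto j(i)$, and $g_1,\dots,g_n\in G$, and mapping $C_d(w_i^+)$ to $C_d(w_{j(i)}^-)$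 via $h_{w_{j(i)}^-}\circ g_i\circ h_{w_i^+}^{-1}$. $F_d\le V_d(G)$ is the subgroup of such homeomorphisms with all $g_i=1$ that preserve the lexicographic order of $C_d$. An inclusion $N\subseteq M$ of von Neumann algebras is irreducible if $N'\cap M\subseteq N$. $L(G)$ is the group von Neumann algebra. *)

(* Defs.v *)
From mathcomp Require Import all_boot.
From mathcomp Require Import boolp classical_sets cardinality.
Set Implicit Arguments. Unset Strict Implicit. Unset Printing Implicit Defensive.

Section Defs.
Variable d : nat.

(* Letters {1,...,d} are represented by 'I_d = {0,...,d-1}. *)
Definition letter := 'I_d.
Definition word := seq letter.            (* vertices of T_d, root = [::] *)
Definition cantor := nat -> letter.

Definition tree_adj (u v : word) : Prop :=
  exists i : letter, v = rcons u i \/ u = rcons v i.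

Definition tree_aut (f : word -> word) : Prop :=
  bijective f /\ f [::] = [::] /\
  (forall u v, tree_adj (f u) (f v) <-> tree_adj u v).

Definition is_aut_subgroup (G : (word -> word) -> Prop) : Prop :=
  (forall g, G g -> tree_aut g) /\
  G id /\
  (forall g h, G g -> G h -> G (g \o h)) /\
  (forall g, G g -> exists h, G h /\ cancel g h /\ cancel h g).

(* phi_i(g) = delta_{rho(g) i}^{-1} o g|_{T_d(i)} o delta_i ; delta_i w = i w,
   and delta^{-1} strips the first letter. *)
Definition section (g : word -> word) (i : letter) : word -> word :=
  fun w => behead (g (i :: w)).

Definition self_similar (G : (word -> word) -> Prop) : Prop :=
  is_aut_subgroup G /\ forall g i, G g -> G (section g i).

Definition cprefix (k : cantor) (m : nat) : word := mkseq k m.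

Definition bact (g : word -> word) (k : cantor) : cantor :=
  fun n => last (k 0) (g (cprefix k n.+1)).

Definition hcone (w : word) (k : cantor) : cantor :=
  fun n => if n < size w then nth (k 0) w n else k (n - size w).

Definition in_cone (w : word) (k : cantor) : Prop := cprefix k (size w) = w.

Definition cone_partition (n : nat) (ws : 'I_n -> word) : Prop :=
  forall k : cantor, exists! i : 'I_n, in_cone (ws i) k.

Definition V_data (G : (word -> word) -> Prop) (x : cantor -> cantor)
  (n : nat) (wp wm : 'I_n -> word) (j : 'I_n -> 'I_n) (g : 'I_n -> word -> word) :
  Prop :=
  cone_partition wp /\ cone_partition wm /\ bijective j /\
  (forall i, G (g i)) /\
  (forall i (k : cantor), x (hcone (wp i) k) = hcone (wm (j i)) (bact (g i) k)).

Definition in_V (G : (word -> word) -> Prop) (x : cantor -> cantor) : Prop :=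
  exists n wp wm j g, @V_data G x n wp wm j g.

Definition lex_lt (k1 k2 : cantor) : Prop :=
  exists m, (forall i, i < m -> k1 i = k2 i) /\ (k1 m < k2 m)%N.

Definition in_F (G : (word -> word) -> Prop) (x : cantor -> cantor) : Prop :=
  (exists n wp wm j, @V_data G x n wp wm j (fun _ => id)) /\
  (forall k1 k2, lex_lt k1 k2 -> lex_lt (x k1) (x k2)).

Definition F_conjugates (G : (word -> word) -> Prop) (x : cantor -> cantor)
  : set (cantor -> cantor) :=
  [set y | exists f finv, in_F G f /\ cancel f finv /\ cancel finv f /\
                          y = f \o x \o finv].

End Defs.

(* Main.v *)
Require Import Defs.
From mathcomp Require Import all_boot.
From mathcomp Require Import boolp classical_sets cardinality.
Set Implicit Arguments. Unset Strict Implicit. Unset Printing Implicit Defensive.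

Section Work.
Variable d : nat.
Implicit Types (k p q : cantor d) (w u v : word d).

Definition sh k : cantor d := fun t => k t.+1.
Definition shn (m : nat) k : cantor d := fun t => k (t + m).
Definition ccons (a : 'I_d) k : cantor d := fun t => if t is t'.+1 then k t' else a.
Definition incb w k : bool := cprefix k (size w) == w.

Lemma ccons_eta k : ccons (k 0) (sh k) = k.
Proof. by apply: funext => -[|t]. Qed.

Lemma sh_ccons a k : sh (ccons a k) = k.
Proof. by []. Qed.

Lemma hcone_nil k : hcone [::] k = k.
Proof. by apply: funext => t; rewrite /hcone ltn0 subn0. Qed.

Lemma hcone_cons a w k : hcone (a :: w) k = ccons a (hcone w k).
Proof. by apply: funext => -[|t] //; rewrite /hcone /= ltnS subSS. Qed.

Lemma incb_nil k : incb [::] k.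
Proof. by []. Qed.

Lemma cprefixS k m : cprefix k m.+1 = k 0 :: cprefix (sh k) m.
Proof.
rewrite /cprefix /mkseq /= -(addn0 1) iotaDl -map_comp.
by congr cons; apply: eq_map => t /=; rewrite add1n.
Qed.

Lemma incb_cons a w k : incb (a :: w) k = (k 0 == a) && incb w (sh k).
Proof. by rewrite /incb /= cprefixS eqseq_cons. Qed.

Lemma incb_catl u s k : incb (u ++ s) k -> incb u k.
Proof.
elim: u k => [|a u IH] k //=; rewrite !incb_cons => /andP [-> /IH] //.
Qed.

Lemma incb_hcone w s q : incb (w ++ s) (hcone w q) = incb s q.
Proof.
elim: w => [|a w IH] /=; first by rewrite hcone_nil.
by rewrite hcone_cons incb_cons /= eqxx IH.
Qed.

Lemma incb_hcone_self w q : incb w (hcone w q).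
Proof. by have := incb_hcone w [::] q; rewrite cats0. Qed.

Lemma hcone_inj w : injective (hcone w).
Proof.
elim: w => [|a w IH] k1 k2; first by rewrite !hcone_nil.
by rewrite !hcone_cons => /(congr1 sh) /IH.
Qed.

Lemma incb_hconeE w k : incb w k -> k = hcone w (shn (size w) k).
Proof.
elim: w k => [|a w IH] k.
  by move=> _; rewrite hcone_nil; apply: funext => t; rewrite /shn addn0.
rewrite incb_cons => /andP [/eqP H0 /IH E].
rewrite hcone_cons -{1}(ccons_eta k) H0; congr ccons.
rewrite {1}E; congr hcone; apply: funext => t; by rewrite /shn /sh /= addnS.
Qed.

Lemma bact_id k : bact id k = k.
Proof. by apply: funext => t; rewrite /bact /cprefix mkseqS last_rcons. Qed.

Lemma bact_local (g : word d -> word d) k1 k2 l :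
  (forall t, t <= l -> k1 t = k2 t) -> bact g k1 l = bact g k2 l.
Proof.
move=> H; rewrite /bact H //.
have -> : cprefix k1 l.+1 = cprefix k2 l.+1 by apply/eq_in_map => t; rewrite mem_iota /= => /H.
by [].
Qed.

Lemma incb_cprefix p k N : incb (cprefix k N) p <-> (forall t, t < N -> p t = k t).
Proof.
rewrite /incb size_mkseq; split.
  move=> /eqP E t Ht; have := congr1 (fun s => nth (p 0) s t) E.
  by rewrite /= !nth_mkseq.
by move=> H; apply/eqP/eq_in_map => t; rewrite mem_iota /= => /H.
Qed.

Lemma lex_inv k1 k2 : lex_lt k1 k2 ->
  (k1 0 < k2 0)%N \/ (k1 0 = k2 0 /\ lex_lt (sh k1) (sh k2)).
Proof.
case=> -[|m] [H1 H2]; first by left.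
right; split; first exact: H1.
by exists m; split => // i Hi; apply: H1.
Qed.

Lemma lex_head k1 k2 : (k1 0 < k2 0)%N -> lex_lt k1 k2.
Proof. by move=> H; exists 0. Qed.

Lemma lex_tail k1 k2 : k1 0 = k2 0 -> lex_lt (sh k1) (sh k2) -> lex_lt k1 k2.
Proof.
move=> H0 [m [H1 H2]]; exists m.+1; split => // -[|i] Hi //.
exact: H1.
Qed.

Definition loc (c : 'I_d) (f : cantor d -> cantor d) k :=
  if k 0 == c then ccons c (f (sh k)) else k.
Definition locw v f := foldr loc f v.

Lemma loc_lex c f : (forall k1 k2, lex_lt k1 k2 -> lex_lt (f k1) (f k2)) ->
  forall k1 k2, lex_lt k1 k2 -> lex_lt (loc c f k1) (loc c f k2).
Proof.
move=> Hf k1 k2 H; rewrite /loc.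
have [S|[E H']] := lex_inv H.
  case: eqP => E1; case: eqP => E2.
  - by move: S; rewrite E1 E2 ltnn.
  - by apply: lex_head; rewrite /= -E1.
  - by apply: lex_head; rewrite /= -E2.
  - by [].
rewrite E; case: eqP => // _; apply: lex_tail => //; exact: Hf.
Qed.

Lemma locw_lex v f : (forall k1 k2, lex_lt k1 k2 -> lex_lt (f k1) (f k2)) ->
  forall k1 k2, lex_lt k1 k2 -> lex_lt (locw v f k1) (locw v f k2).
Proof. by elim: v => [|c v IH] //= Hf; apply: loc_lex; apply: IH. Qed.

Lemma loc_cancel c f g : cancel f g -> cancel (loc c f) (loc c g).
Proof.
move=> H k; rewrite /loc; case: (eqVneq (k 0) c) => E; last by rewrite (negbTE E).
by rewrite /= eqxx sh_ccons H -E ccons_eta.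
Qed.

Lemma locw_cancel v f g : cancel f g -> cancel (locw v f) (locw v g).
Proof. by elim: v => [|c v IH] //= H; apply: loc_cancel; apply: IH. Qed.

Lemma locw_pre v s h k : incb v (locw (v ++ s) h k) = incb v k.
Proof.
elim: v k => [|c v IH] k //=.
rewrite /loc; case: eqP => E; last by [].
by rewrite !incb_cons /= eqxx sh_ccons IH E eqxx.
Qed.

Lemma locw_out v h k : ~~ incb v k -> locw v h k = k.
Proof.
elim: v k => [|c v IH] k //=.
rewrite incb_cons /loc; case: eqP => E //= H.
by rewrite IH // -E ccons_eta.
Qed.

Lemma locw_on v h q : locw v h (hcone v q) = hcone v (h q).
Proof.
elim: v => [|c v IH] /=; first by rewrite !hcone_nil.
by rewrite !hcone_cons /loc /= eqxx sh_ccons IH.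
Qed.


Lemma count1_uniq (T : eqType) (pr : pred T) x0 (s : seq T) : count pr s = 1 ->
  exists i, i < size s /\ pr (nth x0 s i) /\
    forall j, j < size s -> pr (nth x0 s j) -> j = i.
Proof.
elim: s => [|a s IH] //=.
case Ha: (pr a) => /= H.
  have H0 : count pr s = 0 by move: H; rewrite add1n => -[].
  exists 0; split => //; split => // -[|j] //= Hj Hp.
  have : ~~ has pr s by rewrite has_count H0.
  by move/hasPn => Hn; have := Hn _ (mem_nth x0 Hj); rewrite Hp.
rewrite add0n in H; have [i [Hi [Hp Hu]]] := IH H.
exists i.+1; split => //; split => // -[|j] /=; first by rewrite Ha.
by move=> Hj Hpj; rewrite (Hu j).
Qed.

Lemma part_lemma (s : seq (word d)) m (Hs : size s = m) :
  (forall k, count (incb^~ k) s = 1) -> cone_partition (fun i : 'I_m => nth [::] s i).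
Proof.
subst m => Hc k.
have [i [Hi [Hp Hu]]] := count1_uniq [::] (Hc k).
exists (Ordinal Hi); split; first by apply/eqP.
move=> j Hj; apply: val_inj => /=; symmetry; apply: Hu => //; exact/eqP.
Qed.

Definition dok (P : seq (word d * word d)) (f : cantor d -> cantor d) :=
  [/\ forall k, count (incb^~ k) (map fst P) = 1,
      forall k, count (incb^~ k) (map snd P) = 1 &
      forall pq, pq \in P -> forall k, f (hcone pq.1 k) = hcone pq.2 k].

Lemma dok_V (G : (word d -> word d) -> Prop) P f : G id -> dok P f ->
  exists n wp wm j, @V_data d G f n wp wm j (fun _ => id).
Proof.
move=> Gid [H1 H2 H3].
exists (size P), (fun i : 'I_(size P) => nth [::] (map fst P) i),
  (fun i : 'I_(size P) => nth [::] (map snd P) i), id.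
split; first by apply: part_lemma => //; rewrite size_map.
split; first by apply: part_lemma => //; rewrite size_map.
split; first by exists id.
split; first by [].
move=> i k; rewrite bact_id !(nth_map ([::], [::])) //.
by apply: H3; apply: mem_nth.
Qed.

Lemma count_letter (F : pred 'I_d) x : (forall a, F a -> a = x) ->
  count F (enum 'I_d) = F x.
Proof.
move=> H.
rewrite (eq_count (a2 := fun a => F x && (a == x))); last first.
  move=> a /=; case: (eqVneq a x) => [->|Ne]; first by rewrite andbT.
  by rewrite andbF; apply/negP => /H /eqP; rewrite (negbTE Ne).
case: (F x) => /=; last by rewrite count_pred0.
by have := count_uniq_mem x (enum_uniq 'I_d); rewrite mem_enum.
Qed.

Lemma count_letter_f (F P : pred 'I_d) x : (forall a, F a -> a = x) ->
  count F [seq a <- enum 'I_d | P a] = F x && P x.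
Proof.
move=> H; rewrite count_filter (count_letter (x := x)) //.
by move=> a /andP [/H].
Qed.

Definition locP (c : 'I_d) (P : seq (word d * word d)) :=
  [seq ([:: a], [:: a]) | a <- enum 'I_d & a != c] ++
  [seq (c :: pq.1, c :: pq.2) | pq <- P].

Lemma count_loc (c : 'I_d) (s : seq (word d)) k :
  (forall k, count (incb^~ k) s = 1) ->
  count (incb^~ k) ([seq [:: a] | a <- enum 'I_d & a != c] ++ [seq c :: w | w <- s]) = 1.
Proof.
move=> Hs; rewrite count_cat !count_map count_filter.
rewrite (count_letter (x := k 0)); last first.
  by move=> a /andP [] /=; rewrite incb_cons andbT => /eqP.
rewrite /= incb_cons eqxx incb_nil /=.
case: (eqVneq (k 0) c) => E /=.
  rewrite (eq_count (a2 := incb^~ (sh k))); first by rewrite add0n Hs.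
  by move=> w /=; rewrite incb_cons E eqxx.
rewrite (eq_count (a2 := pred0)); first by rewrite count_pred0.
by move=> w /=; rewrite incb_cons (negbTE E).
Qed.

Lemma dok_loc c P f : dok P f -> dok (locP c P) (loc c f).
Proof.
move=> [H1 H2 H3]; split.
- move=> k; have -> : map fst (locP c P) =
    [seq [:: a] | a <- enum 'I_d & a != c] ++ [seq c :: w | w <- map fst P].
    by rewrite map_cat -!map_comp.
  exact: count_loc.
- move=> k; have -> : map snd (locP c P) =
    [seq [:: a] | a <- enum 'I_d & a != c] ++ [seq c :: w | w <- map snd P].
    by rewrite map_cat -!map_comp.
  exact: count_loc.
move=> pq; rewrite mem_cat => /orP [/mapP [a Ha ->] | /mapP [pq' Hpq' ->]] k /=.
  rewrite mem_filter in Ha; case/andP: Ha => Ha _.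
  by rewrite hcone_cons hcone_nil /loc /= (negbTE Ha).
by rewrite !hcone_cons /loc /= eqxx sh_ccons H3.
Qed.

Lemma dok_locw v P f : dok P f -> dok (foldr locP P v) (locw v f).
Proof. by elim: v => [|c v IH] //= H; apply: dok_loc; apply: IH. Qed.

Lemma tree_step (g : word d -> word d) : tree_aut g ->
  forall w i, exists j, g (rcons w i) = rcons (g w) j.
Proof.
move=> [Hb [H0 Hadj]]; have Hinj := bij_inj Hb.
elim/last_ind => [|w' i' IH] i.
  have : tree_adj (g [::]) (g [:: i]) by apply/Hadj; exists i; left.
  rewrite H0 => -[j [E|E]]; first by exists j; rewrite E.
  by move/(congr1 size): E; rewrite size_rcons.
have : tree_adj (g (rcons w' i')) (g (rcons (rcons w' i') i)).
  by apply/Hadj; exists i; left.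
move=> [j [E|E]]; first by exists j.
have [j' E'] := IH i'.
move: E; rewrite E' => /rcons_inj [/Hinj E2 _].
by move/(congr1 size): E2; rewrite !size_rcons => /eqP; rewrite -addn2 -{1}(addn0 (size w')) eqn_add2l.
Qed.

Lemma bact_prefix (g : word d -> word d) : tree_aut g ->
  forall k t, cprefix (bact g k) t = g (cprefix k t).
Proof.
move=> Hg k; elim => [|t IH]; first by case: Hg => _ [-> _].
rewrite /cprefix !mkseqS -/(cprefix _ t) IH.
have [j E] := tree_step Hg (cprefix k t) (k t).
rewrite /cprefix in E; rewrite E; congr rcons.
by rewrite /bact /cprefix mkseqS E last_rcons.
Qed.

Lemma bact_inj (g : word d -> word d) : tree_aut g -> injective (bact g).
Proof.
move=> Hg k1 k2 E; apply: funext => t.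
have : cprefix k1 t.+1 = cprefix k2 t.+1.
  by case: Hg (Hg) => Hb _ Hg; apply: (bij_inj Hb); rewrite -!bact_prefix // E.
by move/(congr1 (fun s => nth (k1 0) s t)); rewrite /= !nth_mkseq.
Qed.

End Work.

Section Psi.
Variable n : nat.
Local Notation D := n.+2.
Implicit Types (k p q : cantor D) (w u v : word D).
Local Notation z := (ord0 : 'I_D).
Local Notation mx := (ord_max : 'I_D).

Lemma eqmx : ((mx : 'I_D) == mx) = true. Proof. exact: eqxx. Qed.
Lemma eqz : ((z : 'I_D) == z) = true. Proof. exact: eqxx. Qed.
Lemma mx_neq_z : (mx == z) = false.
Proof. by []. Qed.

Lemma lt_mx (b : 'I_D) : b != mx -> (b < mx)%N.
Proof. by rewrite -val_eqE /= => H; rewrite ltn_neqAle H -ltnS ltn_ord. Qed.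

Lemma gt_z (a : 'I_D) : a != z -> (z < a)%N.
Proof. by rewrite -val_eqE /= lt0n. Qed.

Definition psi k : cantor D :=
  if k 0 == z then (if k 1 == mx then ccons mx (ccons z (sh (sh k))) else sh k)
  else ccons mx k.
Definition psii k : cantor D :=
  if k 0 == mx then (if k 1 == z then ccons z (ccons mx (sh (sh k))) else sh k)
  else ccons z k.

Lemma psiK : cancel psi psii.
Proof.
move=> k; rewrite /psi.
case: (eqVneq (k 0) z) => H0.
  case: (eqVneq (k 1) mx) => H1.
    rewrite /psii /= ?eqmx ?eqz.
    by apply: funext => -[|[|t]] //=; rewrite ?H0 ?H1.
  rewrite /psii /sh /= (negbTE H1).
  by apply: funext => -[|t] //=; rewrite ?H0.
rewrite /psii /= ?eqmx ?eqz (negbTE H0).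
by apply: funext.
Qed.

Lemma psiiK : cancel psii psi.
Proof.
move=> k; rewrite /psii.
case: (eqVneq (k 0) mx) => H0.
  case: (eqVneq (k 1) z) => H1.
    rewrite /psi /= ?eqmx ?eqz.
    by apply: funext => -[|[|t]] //=; rewrite ?H0 ?H1.
  rewrite /psi /sh /= (negbTE H1).
  by apply: funext => -[|t] //=; rewrite ?H0.
rewrite /psi /= ?eqmx ?eqz (negbTE H0).
by apply: funext.
Qed.

Lemma psi_lex k1 k2 : lex_lt k1 k2 -> lex_lt (psi k1) (psi k2).
Proof.
move=> H; rewrite /psi.
have [S1|[E1 H']] := lex_inv H.
  have A2 : k2 0 != z.
    by rewrite -val_eqE /= -lt0n (leq_ltn_trans _ S1).
  rewrite (negbTE A2).
  case: (eqVneq (k1 0) z) => A1.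
    case: (eqVneq (k1 1) mx) => B1.
      by apply: lex_tail => //; apply: lex_head; apply: gt_z.
    by apply: lex_head; apply: lt_mx.
  by apply: lex_tail.
rewrite -E1.
case: (eqVneq (k1 0) z) => A1; last by apply: lex_tail.
have [S2|[E2 H'']] := lex_inv H'.
  rewrite /sh /= in S2.
  have B1 : k1 1 != mx.
    by rewrite -val_eqE /= neq_ltn (leq_trans S2) // -ltnS ltn_ord.
  rewrite (negbTE B1).
  case: (eqVneq (k2 1) mx) => B2.
    by apply: lex_head; apply: lt_mx.
  by apply: lex_head.
rewrite /sh /= in E2; rewrite -E2.
case: (eqVneq (k1 1) mx) => B1.
  by apply: lex_tail => //; apply: lex_tail.
by apply: lex_tail.
Qed.

Definition Ppsi : seq (word D * word D) :=
  [seq ([:: z; a], [:: a]) | a <- enum 'I_D & a != mx] ++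
  [:: ([:: z; mx], [:: mx; z])] ++
  [seq ([:: a], [:: mx; a]) | a <- enum 'I_D & a != z].

Lemma dok_psi : dok Ppsi psi.
Proof.
split.
- move=> k; rewrite /Ppsi !map_cat !count_cat -!map_comp !count_map.
  rewrite (@count_letter_f _ _ _ (k 1)); last first.
    by move=> a /=; rewrite !incb_cons => /andP [_ /andP [/eqP]].
  rewrite (@count_letter_f _ _ _ (k 0)); last first.
    by move=> a /=; rewrite !incb_cons => /andP [/eqP].
  rewrite /= !incb_cons !incb_nil /sh ?eqxx ?andbT /=.
  case: (eqVneq (k 0) z) => H0 /=; last by [].
  by case: (eqVneq (k 1) mx).
- move=> k; rewrite /Ppsi !map_cat !count_cat -!map_comp !count_map.
  rewrite (@count_letter_f _ _ _ (k 0)); last first.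
    by move=> a /=; rewrite !incb_cons => /andP [/eqP].
  rewrite (@count_letter_f _ _ _ (k 1)); last first.
    by move=> a /=; rewrite !incb_cons => /andP [_ /andP [/eqP]].
  rewrite /= !incb_cons !incb_nil /sh ?eqxx ?andbT /=.
  case: (eqVneq (k 0) mx) => H0 /=; last by [].
  by case: (eqVneq (k 1) z).
move=> pq H k; move: H; rewrite !mem_cat => /or3P [/mapP [a Ha ->] | | /mapP [a Ha ->]].
- rewrite mem_filter in Ha; case/andP: Ha => Ha _.
  by rewrite !hcone_cons hcone_nil /psi /= (negbTE Ha).
- by rewrite mem_seq1 => /eqP -> /=; rewrite !hcone_cons hcone_nil /psi /= ?eqmx ?eqz.
- rewrite mem_filter in Ha; case/andP: Ha => Ha _.
  by rewrite !hcone_cons hcone_nil /psi /= (negbTE Ha).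
Qed.


Lemma key (G : (word D -> word D) -> Prop) (Gid : G id) (x : cantor D -> cantor D) (u : word D) :
  (forall p, incb u p -> ~~ incb u (x p)) ->
  (forall p1 p2, incb u p1 -> incb u p2 -> x p1 = x p2 -> p1 = p2) ->
  infinite_set (F_conjugates G x).
Proof.
move=> Hout Hinj.
pose v t := u ++ nseq t z.
pose fa t := locw (v t) psi.
pose fi t := locw (v t) psii.
pose Y t := fa t \o x \o fi t.
have Hmem t : F_conjugates G x (Y t).
  exists (fa t), (fi t); split; last first.
    split; first exact: locw_cancel psiK.
    by split; first exact: locw_cancel psiiK.
  split; first exact: (dok_V Gid (dok_locw (v t) dok_psi)).
  exact: (locw_lex (v t) psi_lex).
have Hdist a b : a < b -> Y a <> Y b.
  move=> Hab E.
  have Efi : fi a = fi b.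
    apply: funext => p.
    case: (boolP (incb u p)) => Hp.
      have Ha : incb u (fi a p) by rewrite /fi /v locw_pre.
      have Hb : incb u (fi b p) by rewrite /fi /v locw_pre.
      apply: Hinj => //.
      have := congr1 (fun f => f p) E; rewrite /Y /=.
      rewrite /fa !locw_out //; apply/negP => /incb_catl; apply/negP; exact: Hout.
    by rewrite /fi !locw_out //; apply/negP => /incb_catl; apply/negP.
  have Efa : fa a = fa b.
    apply: funext => q.
    have h1 : fa a (fi a (fa b q)) = fa b q := locw_cancel (v a) psiiK (fa b q).
    have h2 : fi b (fa b q) = q := locw_cancel (v b) psiK q.
    by rewrite -h1 Efi h2.
  pose q0 : cantor D := ccons mx (fun _ => z).
  pose pt := hcone (v a) q0.
  have E1 : fa a pt = hcone (v a) (psi q0) by rewrite /fa /pt locw_on.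
  have [c Hc] : exists c, b = a + c.+1 by exists (b - a.+1); rewrite addnS -addSn subnKC.
  have E2 : fa b pt = pt.
    rewrite /fa locw_out // /v Hc nseqD catA /pt incb_hcone.
    by rewrite (_ : nseq c.+1 z = z :: nseq c z) // incb_cons.
  have : psi q0 = q0.
    by apply: (@hcone_inj _ (v a)); rewrite -E1 Efa E2.
  by move/(congr1 (fun k => k 1)); rewrite /psi /q0 /=.
have Yinj : injective Y.
  move=> a b E; apply/eqP; apply: contraT; rewrite neq_ltn => /orP [H|H].
    by case: (Hdist _ _ H E).
  by case: (Hdist _ _ H (esym E)).
move=> Hfin.
have := @finite_preimage _ _ (F_conjugates G x) Y (fun a b _ _ => @Yinj a b) Hfin.
have -> : (Y @^-1` (F_conjugates G x))%classic = setT.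
  by apply/seteqP; split => // t _; exact: Hmem.
exact: infinite_nat.
Qed.

End Psi.

Theorem mainTheorem10 (d : nat) (hd : 2 <= d) (G : (word d -> word d) -> Prop) :
  self_similar G ->
  forall x : cantor d -> cantor d,
    in_V G x -> x <> id -> infinite_set (F_conjugates G x).
Proof.
case: d hd G => [|[|n]] // _ G [[HGaut [HGid _]] _] x
  [m [wp [wm [j [g [Pp [Pm [Hj [Hg Hx]]]]]]]]] Hxid.
have [kk Hk] : exists k, x k <> k.
  by apply/existsNP => H; apply: Hxid; apply: funext.
have [i [Hi _]] := Pp kk.
have Hgi : tree_aut (g i) := HGaut _ (Hg i).
have HxC p : in_cone (wp i) p ->
    x p = hcone (wm (j i)) (bact (g i) (shn (size (wp i)) p)).
  by move=> Hp; rewrite {1}(incb_hconeE (introT eqP Hp)) Hx.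
have [mm Hmm] : exists t, x kk t <> kk t.
  by apply/existsNP => H; apply: Hk; apply: funext.
pose N := mm.+1 + size (wp i).
pose u := cprefix kk N.
have Hagree p : incb u p -> forall t, t < N -> p t = kk t.
  by move=> H; apply/(incb_cprefix p kk N).
have HinW p : incb u p -> in_cone (wp i) p.
  move=> Hp; rewrite /in_cone; transitivity (cprefix kk (size (wp i))); last exact: Hi.
  apply/eq_in_map => t; rewrite mem_iota /= => Ht; apply: Hagree => //.
  by rewrite /N ltn_addl.
have HA p : incb u p -> x p mm = x kk mm.
  move=> Hp; rewrite (HxC p (HinW p Hp)) (HxC kk Hi) /hcone.
  case: ifP => Hlt; first by apply: set_nth_default.
  apply: bact_local => t Ht; rewrite /shn; apply: Hagree => //.
  by rewrite /N ltn_add2r ltnS (leq_trans Ht) // leq_subr.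
have HmN : mm < N by rewrite /N addSn ltnS leq_addr.
apply: (@key n G HGid x u).
  move=> p Hp; apply/negP => Hxp.
  by have := Hagree _ Hxp mm HmN; rewrite HA.
move=> p1 p2 H1 H2 E.
rewrite (incb_hconeE (introT eqP (HinW _ H1))) (incb_hconeE (introT eqP (HinW _ H2))).
congr hcone; apply: (bact_inj Hgi); apply: (@hcone_inj _ (wm (j i))).
by rewrite -!HxC //; apply: HinW.
Qed.
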